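(* Let $i,j,k$ be three distinct agents with nominal states $\tilde g_i,\tilde g_j,\tilde g_k\in\mathbb R^3$, let $\theta\in\mathbb R$, and let $g_i,g_j,g_k\in\mathbb R^3$ satisfy $$W_{jk}(g_i-g_k)+W_{ki}(g_j-g_k)=0.$$ Then for every $s,\tau\in\mathbb R^3$, with $S=\Theta\,\mathrm{diag}(s)\,\Theta^\top$ and $g'_r=Sg_r+\tau$ for $r\in\{i,j,k\}$, one also has $W_{jk}(g'_i-g'_k)+W_{ki}(g'_j-g'_k)=0$.
   Context: $R(\theta)$ is the $2\times2$ rotation matrix by $\theta$, $\Theta=\mathrm{diag}(R(\theta),1)\in\mathbb R^{3\times3}$. Write $\tilde g_r=[\tilde p_r^\top,\tilde\phi_r]^\top$ and $\Theta^\top\tilde g_r=[\tilde p^x_{r,\theta},\tilde p^y_{r,\theta},\tilde\phi_r]^\top$; for $u,v\in\{i,j,k\}$, $\tilde p^x_{uv,\theta}=\tilde p^x_{u,\theta}-\tilde p^x_{v,\theta}$, similarly $\tilde p^y_{uv,\theta}$, $\tilde\phi_{uv}=\tilde\phi_u-\tilde\phi_v$, $w_{uv}=\mathrm{diag}(\tilde p^x_{uv,\theta},\tilde p^y_{uv,\theta},\tilde\phi_{uv})$, and $W_{uv}=w_{uv}\Theta^\top$. *)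

(* Defs.v *)
From HB Require Import structures.
From mathcomp Require Import all_boot all_order all_algebra.
From mathcomp Require Import all_classical all_reals all_analysis.
Set Implicit Arguments. Unset Strict Implicit. Unset Printing Implicit Defensive.
Import Order.TTheory GRing.Theory Num.Theory.
Local Open Scope ring_scope.

Definition Theta {R : realType} (theta : R) : 'M[R]_3 :=
  \matrix_(a < 3, b < 3)
    match nat_of_ord a, nat_of_ord b with
    | 0, 0 => cos theta
    | 0, 1 => - sin theta
    | 1, 0 => sin theta
    | 1, 1 => cos theta
    | 2, 2 => 1
    | _, _ => 0
    end.

(* w_uv = diag(Theta^T (gt_u - gt_v)) ; componentwise differences of the
   rotated nominal states equal the components of Theta^T (gt_u - gt_v) *)
Definition w_mat {R : realType} (theta : R) (gu gv : 'cV[R]_3) : 'M[R]_3 :=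
  diag_mx ((Theta theta)^T *m gu - (Theta theta)^T *m gv)^T.

Definition W_mat {R : realType} (theta : R) (gu gv : 'cV[R]_3) : 'M[R]_3 :=
  w_mat theta gu gv *m (Theta theta)^T.

Definition S_mat {R : realType} (theta : R) (s : 'cV[R]_3) : 'M[R]_3 :=
  Theta theta *m diag_mx s^T *m (Theta theta)^T.

(* Main.v *)
Require Import Defs.
From HB Require Import structures.
From mathcomp Require Import all_boot all_order all_algebra.
From mathcomp Require Import all_classical all_reals all_analysis.
From mathcomp Require Import ring.
Import Order.TTheory GRing.Theory Num.Theory.
Local Open Scope ring_scope.

Lemma ThetaTK (R : realType) (t : R) : (Theta t)^T *m Theta t = 1%:M.
Proof.
have H := cos2Dsin2 t.
apply/matrixP => a b; rewrite !mxE.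
rewrite !big_ord_recr big_ord0 /= !mxE.
case: a => [[|[|[|a]]] Ha] //; case: b => [[|[|[|b]]] Hb] //=;
  rewrite ?mulr0 ?mul0r ?add0r ?addr0 ?mulr1 //.
all: try ring.
all: by rewrite -H; ring.
Qed.

Lemma WS (R : realType) (t : R) u v s :
  W_mat t u v *m S_mat t s = diag_mx s^T *m W_mat t u v.
Proof.
rewrite /W_mat /S_mat /w_mat !mulmxA -(mulmxA _ (Theta t)^T (Theta t)).
by rewrite ThetaTK mulmx1 diag_mxC.
Qed.

Theorem lemma5 (R : realType) (Agent : Type) (gt : Agent -> 'cV[R]_3)
  (i j k : Agent) (hij : i <> j) (hjk : j <> k) (hik : i <> k)
  (theta : R) (gi gj gk : 'cV[R]_3) :
  W_mat theta (gt j) (gt k) *m (gi - gk) + W_mat theta (gt k) (gt i) *m (gj - gk) = 0 ->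
  forall s tau : 'cV[R]_3,
    let gi' := S_mat theta s *m gi + tau in
    let gj' := S_mat theta s *m gj + tau in
    let gk' := S_mat theta s *m gk + tau in
    W_mat theta (gt j) (gt k) *m (gi' - gk') + W_mat theta (gt k) (gt i) *m (gj' - gk') = 0.
Proof.
move=> H s tau gi' gj' gk'.
have E : forall x, (S_mat theta s *m x + tau) - gk' = S_mat theta s *m (x - gk).
  by move=> x; rewrite /gk' mulmxBr opprD addrACA subrr addr0.
rewrite /gi' /gj' !E (mulmxA (W_mat _ _ _)) WS (mulmxA (W_mat _ _ _)) WS.
rewrite -!(mulmxA (diag_mx s^T)).
rewrite -(mulmxDr (diag_mx s^T)).
by move: H => ->; rewrite mulmx0.
Qed.
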